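(* For all $x\in\mathbb{C}$ and all integers $n\ge0$, \[ \sum_{k=0}^n x^k\big(L_{2k}+(3x-2)F_{2k+2}\big)=3x^{n+1}F_{2n+2},\qquad \sum_{k=0}^n x^k\big(5F_{2k}+(3x-2)L_{2k+2}\big)=3\big(x^{n+1}L_{2n+2}-2\big), \] \[ \sum_{k=0}^n x^k\big(Q_{2k}+(3x-1)P_{2k+2}\big)=3x^{n+1}P_{2n+2},\qquad \sum_{k=0}^n x^k\big(8P_{2k}+(3x-1)Q_{2k+2}\big)=3\big(x^{n+1}Q_{2n+2}-2\big). \]
   Context: $F_n,L_n$ are the Fibonacci and Lucas numbers ($F_0=0,F_1=1,L_0=2,L_1=1$, $W_n=W_{n-1}+W_{n-2}$). $P_n,Q_n$ are the Pell and Pell–Lucas numbers: $P_0=0$, $P_1=1$, $Q_0=2$, $Q_1=2$, $W_n=2W_{n-1}+W_{n-2}$. *)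

(* Defs.v *)
From HB Require Import structures.
From mathcomp Require Import all_boot all_order all_algebra.
From mathcomp Require Import complex.
From mathcomp Require Import Rstruct.

Set Implicit Arguments. Unset Strict Implicit. Unset Printing Implicit Defensive.
Import Order.TTheory GRing.Theory Num.Theory.

Notation CC := (complex Rdefinitions.R).

(* Generic second-order sequence W_0 = a, W_1 = b, W_n = p W_{n-1} + W_{n-2}. *)
Fixpoint lucas_pair (p a b : nat) (n : nat) : nat * nat :=
  match n with
  | 0 => (a, b)
  | m.+1 => let: (u, v) := lucas_pair p a b m in (v, p * v + u)
  end.
Definition W (p a b n : nat) : nat := (lucas_pair p a b n).1.

Definition Fib (n : nat) : nat := W 1 0 1 n.
Definition Luc (n : nat) : nat := W 1 2 1 n.
Definition Pell (n : nat) : nat := W 2 0 1 n.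
Definition PellLuc (n : nat) : nat := W 2 2 2 n.

Lemma Fib_rec n : Fib n.+2 = Fib n.+1 + Fib n.
Proof. rewrite /Fib /W /=; case: lucas_pair => u v /=; by rewrite mul1n addnC. Qed.

(* Main.v *)
Require Import Defs.
From mathcomp Require Import all_boot all_order all_algebra.
From mathcomp Require Import complex Rstruct.
From mathcomp Require Import ring zify.
Import GRing.Theory ComplexField.
Local Open Scope ring_scope.

Lemma W_rec p a b n : W p a b n.+2 = (p * W p a b n.+1 + W p a b n)%N.
Proof. rewrite /W /=; case: lucas_pair => u v /=; by rewrite addnC. Qed.

Lemma W_luc2 p m : (W p 2 p m.+1 = W p 0 1 m + W p 0 1 m.+2 /\
   W p 2 p m.+2 = W p 0 1 m.+1 + W p 0 1 m.+3)%N.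
Proof.
elim: m => [|m [IH1 IH2]].
  rewrite /W /=; split; nia.
split => //.
rewrite (W_rec p 2 p m.+1) IH1 IH2 (W_rec p 0 1 m.+2) (W_rec p 0 1 m.+1) (W_rec p 0 1 m).
nia.
Qed.

Lemma W_luc p m : W p 2 p m.+1 = (W p 0 1 m + W p 0 1 m.+2)%N.
Proof. by case: (W_luc2 p m). Qed.

Lemma step_eq (x : CC) (n : nat) : (2 * n.+1 = (2*n+1).+1 /\ 2 * n.+1 + 2 = (2*n+1).+3
   /\ 2 * n + 2 = (2*n+1).+1)%N.
Proof. lia. Qed.

Theorem corollary7 (x : CC) (n : nat) :
  [/\ \sum_(0 <= k < n.+1) x ^+ k * ((Luc (2 * k))%:R + (3 * x - 2) * (Fib (2 * k + 2))%:R)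
        = 3 * x ^+ n.+1 * (Fib (2 * n + 2))%:R,
      \sum_(0 <= k < n.+1) x ^+ k * (5 * (Fib (2 * k))%:R + (3 * x - 2) * (Luc (2 * k + 2))%:R)
        = 3 * (x ^+ n.+1 * (Luc (2 * n + 2))%:R - 2),
      \sum_(0 <= k < n.+1) x ^+ k * ((PellLuc (2 * k))%:R + (3 * x - 1) * (Pell (2 * k + 2))%:R)
        = 3 * x ^+ n.+1 * (Pell (2 * n + 2))%:R
    & \sum_(0 <= k < n.+1) x ^+ k * (8 * (Pell (2 * k))%:R + (3 * x - 1) * (PellLuc (2 * k + 2))%:R)
        = 3 * (x ^+ n.+1 * (PellLuc (2 * n + 2))%:R - 2)].
Proof.
elim: n => [|n [IH1 IH2 IH3 IH4]].
  rewrite !big_nat1 /Luc /Fib /Pell /PellLuc /W /= !expr0 expr1; split; ring.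
have [E1 [E2 E3]] := step_eq x n.
rewrite !(big_nat_recr _ _ _ (leq0n n.+1)) /= IH1 IH2 IH3 IH4.
rewrite E2 E1 E3.
move: (2 * n + 1)%N => m.
have hF2 p : W p 0 1 m.+2 = (p * W p 0 1 m.+1 + W p 0 1 m)%N by rewrite W_rec.
have hF3 p : W p 0 1 m.+3 = (p * (p * W p 0 1 m.+1 + W p 0 1 m) + W p 0 1 m.+1)%N
  by rewrite W_rec hF2.
have hF4 p : W p 0 1 m.+4 = (p * (p * (p * W p 0 1 m.+1 + W p 0 1 m) + W p 0 1 m.+1)
   + (p * W p 0 1 m.+1 + W p 0 1 m))%N by rewrite W_rec hF3 hF2.
rewrite /Luc /PellLuc !W_luc /Fib /Pell !hF4 !hF3 !hF2.
move: (W 1 0 1 m) (W 1 0 1 m.+1) (W 2 0 1 m) (W 2 0 1 m.+1) => a b c d.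
rewrite !(natrD, natrM) !exprS; split; ring.
Qed.
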